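(* For every positive integer $n$ there exist $n$ Boolean attributes $A_1,\ldots,A_n$, a binary boosted tree $BT=\{F\}$ consisting of a single forest $F$ over them, and an instance $\vec x\in\vec X$ such that the unique tree-specific explanation for $\vec x$ given $BT$ is $t_{\vec x}$ itself, while $\emptyset$ is the unique sufficient reason for $\vec x$ given $BT$.
   Context: With Boolean attributes $A_1,\ldots,A_n$ (domain $\{0,1\}$), an instance is $\vec x=(v_1,\ldots,v_n)\in\{0,1\}^n$; $\vec X$ is the set of all instances; $t_{\vec x}=\{(A_i=v_i):i\in[n]\}$. An instance $\vec x'$ extends $t$ if $t\subseteq t_{\vec x'}$. A regression tree is a finite binary tree whose internal nodes are labelled by conditions $A_i=1$ and whose leaves are labelled by real numbers; $w(T,\vec x)$ is the label of the leaf reached by following, from the root, the branch determined by whether $\vec x$ satisfies each node's condition. For $t\subseteq t_{\vec x}$: $w_\downarrow(t,T)=\min\{w(T,\vec x'):\vec x'\text{ extends }t\}$, $w_\uparrow(t,T)=\max\{w(T,\vec x'):\vec x'\text{ extends }t\}$. A forest $F=\{T_1,\ldots,T_p\}$ has $w(F,\vec x)=\sum_k w(T_k,\vec x)$; for $BT=\{F\}$, $BT(\vec x)=1$ if $w(F,\vec x)>0$ and $0$ otherwise. An abductive explanation for $\vec x$ given $BT$ is $t\subseteq t_{\vec x}$ such that every $\vec x'$ extending $t$ has $BT(\vec x')=BT(\vec x)$; a sufficient reason is a subset-minimal abductive explanation. A tree-specific explanation for $\vec x$ given $BT$: if $BT(\vec x)=1$, a $t\subseteq t_{\vec x}$ with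 $\sum_k w_\downarrow(t,T_k)>0$ such that no proper subset of $t$ satisfies this; if $BT(\vec x)=0$, a $t\subseteq t_{\vec x}$ with $\sum_k w_\uparrow(t,T_k)\le 0$ such that no proper subset of $t$ satisfies this. *)

(* Defs.v *)
From HB Require Import structures.
From mathcomp Require Import all_boot all_order all_algebra.
From mathcomp Require Import reals.
Set Implicit Arguments. Unset Strict Implicit. Unset Printing Implicit Defensive.
Import Order.TTheory GRing.Theory Num.Theory.
Local Open Scope ring_scope.

Section BT.
Variables (R : realType) (n : nat).

Definition instance := {ffun 'I_n -> bool}.

(* A term t ⊆ t_x is determined by the set S of attributes it fixes:
   t = {(A_i = x_i) : i ∈ S}. *)
Definition extends (S : {set 'I_n}) (x x' : instance) : bool :=
  [forall i in S, x' i == x i].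

(* Regression trees: internal nodes test A_i = 1; leaves carry reals.
   [Node i t1 t0] goes to t1 if the condition holds, to t0 otherwise. *)
Inductive rtree :=
| Leaf of R
| Node of 'I_n & rtree & rtree.

Fixpoint wT (T : rtree) (x : instance) : R :=
  match T with
  | Leaf r => r
  | Node i t1 t0 => if x i then wT t1 x else wT t0 x
  end.

(* min / max of w(T, x') over the instances x' extending t (x itself extends t). *)
Definition w_down (T : rtree) (x : instance) (S : {set 'I_n}) : R :=
  \big[Order.min/wT T x]_(x' : instance | extends S x x') wT T x'.
Definition w_up (T : rtree) (x : instance) (S : {set 'I_n}) : R :=
  \big[Order.max/wT T x]_(x' : instance | extends S x x') wT T x'.

Definition forest := seq rtree.
Definition wF (F : forest) (x : instance) : R := \sum_(T <- F) wT T x.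
Definition BT (F : forest) (x : instance) : bool := 0 < wF F x.

Definition abductive (F : forest) (x : instance) (S : {set 'I_n}) : Prop :=
  forall x', extends S x x' -> BT F x' = BT F x.

Definition sufficient_reason (F : forest) (x : instance) (S : {set 'I_n}) : Prop :=
  abductive F x S /\ forall S' : {set 'I_n}, S' \proper S -> ~ abductive F x S'.

Definition ts_cond (F : forest) (x : instance) (S : {set 'I_n}) : Prop :=
  if BT F x then 0 < \sum_(T <- F) w_down T x S
  else \sum_(T <- F) w_up T x S <= 0.

Definition tree_specific (F : forest) (x : instance) (S : {set 'I_n}) : Prop :=
  ts_cond F x S /\ forall S' : {set 'I_n}, S' \proper S -> ~ ts_cond F x S'.

End BT.

(* Main.v *)
Require Import Defs.
From HB Require Import structures.
From mathcomp Require Import all_boot all_order all_algebra.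
From mathcomp Require Import reals.
Import Order.TTheory GRing.Theory Num.Theory.

Section Aux.
Variables (R : realType) (n : nat).
Local Open Scope ring_scope.

Definition TA (i : 'I_n) : rtree R n := Node i (Leaf n 0) (Leaf n 1).
Definition TB (i : 'I_n) : rtree R n := Node i (Leaf n 0) (Leaf n (-1)).
Definition FF : forest R n := map TA (enum 'I_n) ++ map TB (enum 'I_n).
Definition x1 : instance n := [ffun => true].

Lemma wF0 x : wF FF x = 0.
Proof.
rewrite /wF /FF big_cat !big_map -[Monoid.Law.sort _ _ _]/(_ + _) -big_split /=.
rewrite big1 // => i _; case: (x i) => /=; rewrite ?addr0 ?subrr //.
Qed.

Lemma BT0 x : BT FF x = false.
Proof. by rewrite /BT wF0 ltxx. Qed.

Lemma wupB i S : w_up (TB i) x1 S = 0.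
Proof.
rewrite /w_up /= /x1 ffunE /=.
apply/le_anti/andP; split.
  apply/bigmax_leP; split => // x' _; case: (x' i) => //=.
  by rewrite lerN10.
have ex : extends S x1 x1 by apply/forallP => j; apply/implyP.
have := @le_bigmax_cond _ _ _ (0:R) x1 (extends S x1) (wT (TB i)) ex.
by rewrite /= /x1 ffunE.
Qed.

Lemma wupA_ge0 i S : 0 <= w_up (TA i) x1 S.
Proof.
rewrite /w_up /= /x1 ffunE /=.
have ex : extends S x1 x1 by apply/forallP => j; apply/implyP.
have := @le_bigmax_cond _ _ _ (0:R) x1 (extends S x1) (wT (TA i)) ex.
by rewrite /= /x1 ffunE.
Qed.

Lemma wupA_in i (S : {set 'I_n}) : i \in S -> w_up (TA i) x1 S = 0.
Proof.
move=> iS; apply/le_anti; rewrite wupA_ge0 andbT.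
rewrite /w_up /= /x1 ffunE /=.
apply/bigmax_leP; split => // x' /forallP /(_ i); rewrite iS /= ffunE => /eqP ->.
by [].
Qed.

Lemma wupA_out i (S : {set 'I_n}) : i \notin S -> 1 <= w_up (TA i) x1 S.
Proof.
move=> iS; rewrite /w_up.
pose y : instance n := [ffun j => j != i].
have -> : (1:R) = wT (TA i) y by rewrite /= /y ffunE eqxx.
apply: le_bigmax_cond; apply/forallP => j; apply/implyP => jS.
rewrite /y /x1 !ffunE; apply/eqP; apply/negP => /eqP ji.
by move: iS; rewrite -ji jS.
Qed.

Lemma sum_up S : \sum_(T <- FF) w_up T x1 S = \sum_(i < n) w_up (TA i) x1 S.
Proof.
rewrite /FF big_cat !big_map /= [X in _ + X]big1 ?addr0 ?big_enum //.
by move=> i _; rewrite wupB.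
Qed.

Lemma ts_iff S : ts_cond FF x1 S <-> S = setT.
Proof.
rewrite /ts_cond BT0 sum_up; split.
  move=> h; apply/setP => i; rewrite inE; apply/negPn/negP => iS.
  have : 1 <= \sum_(j < n) w_up (TA j) x1 S.
    rewrite (bigD1 i) //= -[X in X <= _]addr0; apply: lerD; first exact: wupA_out.
    by apply: sumr_ge0 => j _; exact: wupA_ge0.
  move=> h1; have := le_trans h1 h; by rewrite ler10.
move=> ->; rewrite big1 // => i _; apply: wupA_in; exact: in_setT.
Qed.

End Aux.

Theorem proposition5 (R : realType) (n : nat) : (0 < n)%N ->
  exists (F : forest R n) (x : instance n),
    (forall S : {set 'I_n}, tree_specific F x S <-> S = setT) /\
    (forall S : {set 'I_n}, sufficient_reason F x S <-> S = set0).
Proof.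
move=> _; exists (FF R n), (x1 n); split => S.
  rewrite /tree_specific ts_iff; split; first by case.
  move=> ->; split => // S' /properP [_ [i _ iS']] /ts_iff Se.
  by move: iS'; rewrite Se in_setT.
have abd : forall S0, abductive (FF R n) (x1 n) S0 by move=> S0 x' _; rewrite !BT0.
split.
  case=> _ h; apply/eqP/negPn/negP => S0; apply: (h set0) => //.
  by rewrite properE sub0set /= subset0.
move=> ->; split => // S' /properP [_ [i]]; by rewrite inE.
Qed.
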